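(* Let $L_{\mathrm{Rect}}$ be the set of words of positive length over the alphabet $\{1,2,u,d\}$ defined in the context. Then: (1) $L_{\mathrm{Rect}}$ consists precisely of those nonempty words over $\{1,2,u,d\}$ whose last (rightmost) letter is $1$ and which contain neither $21$ nor $u1$ as a (contiguous) substring; (2) $L_{\mathrm{Rect}}$ is the language of the regular expression $(1^*(2|u)^*d)^*1^+$.
   Context: Permutations $\pi\in S_n$ are written in one-line form $[\pi_1\cdots\pi_n]$; $e_n$ denotes the identity of $S_n$ and $e_0$ the unique (empty) permutation of size $0$. A permutation is rectangular if it avoids the patterns $2413,2431,4213,4231$. For $\pi\in S_n$ and $1\le i,j\le n+1$, the insertion operator $\rho_{i,j}(\pi)\in S_{n+1}$ is obtained by increasing by $1$ every entry of $\pi$ that is $\ge i$ and then inserting the value $i$ so that it occupies position $j$. Define operators on rectangular permutations: $\psi_1=\rho_{1,1}$, with domain all rectangular permutations (including $e_0$); $\psi_2=\rho_{1,2}$, with domain the rectangular permutations $\pi$ of size $\ge 1$ with $\pi_1\ne 1$; $\psi_u(\pi)=\rho_{\pi_1,1}(\pi)$, with the same domain as $\psi_2$; $\psi_d(\pi)=\rho_{\pi_1+1,1}(\pi)$, with domain all rectangular permutations of size $\ge1$. A word $x_m x_{m-1}\cdots x_1$ over $\{1,2,u,d\}$ stands for the composition $\psi_{x_m}\circ\cdots\circ\psi_{x_1}$ (the rightmost letter is applied first). $L_{\mathrm{Rect}}$ is the set of words of length $m\ge1$ such that $\psi_{x_m}\circ\cdots\circ\psi_{x_1}(e_0)$ is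 defined, i.e. for each $j$, the permutation $\psi_{x_{j-1}}\circ\cdots\circ\psi_{x_1}(e_0)$ lies in the domain of $\psi_{x_j}$. *)

(* Defs.v *)
From HB Require Import structures.
From mathcomp Require Import all_boot.
Set Implicit Arguments. Unset Strict Implicit. Unset Printing Implicit Defensive.

(* Permutations in one-line form [pi_1 ... pi_n] as sequences of naturals;
   e_0 is the empty sequence. *)
Definition is_perm (pi : seq nat) : Prop := perm_eq pi (iota 1 (size pi)).

(* pi contains the pattern p: some subsequence of pi (values of a permutation
   are distinct, so a subsequence = a choice of positions) is order-isomorphic
   to p. *)
Definition contains (pi p : seq nat) : Prop :=
  exists s : seq nat, subseq s pi /\ size s = size p /\
    forall a b, a < size p -> b < size p ->
      (nth 0 s a < nth 0 s b) = (nth 0 p a < nth 0 p b).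

Definition rectangular (pi : seq nat) : Prop :=
  is_perm pi /\
  ~ contains pi [:: 2; 4; 1; 3] /\ ~ contains pi [:: 2; 4; 3; 1] /\
  ~ contains pi [:: 4; 2; 1; 3] /\ ~ contains pi [:: 4; 2; 3; 1].

(* rho_{i,j}(pi): increase entries >= i by 1, then insert value i at
   (1-based) position j. *)
Definition rho (i j : nat) (pi : seq nat) : seq nat :=
  let s := map (fun v => if i <= v then v.+1 else v) pi in
  take j.-1 s ++ i :: drop j.-1 s.

Inductive letter := L1 | L2 | Lu | Ld.

Definition letter_eqb (x y : letter) : bool :=
  match x, y with
  | L1, L1 | L2, L2 | Lu, Lu | Ld, Ld => true
  | _, _ => false
  end.
Lemma letter_eqP : Equality.axiom letter_eqb.
Proof. by case; case; constructor. Qed.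
HB.instance Definition _ := hasDecEq.Build letter letter_eqP.

(* the operators psi_x (total functions; the domains are given separately) *)
Definition psi (x : letter) (pi : seq nat) : seq nat :=
  match x with
  | L1 => rho 1 1 pi
  | L2 => rho 1 2 pi
  | Lu => rho (head 0 pi) 1 pi
  | Ld => rho (head 0 pi).+1 1 pi
  end.

Definition in_dom (x : letter) (pi : seq nat) : Prop :=
  rectangular pi /\
  match x with
  | L1 => True
  | L2 | Lu => 0 < size pi /\ head 0 pi <> 1
  | Ld => 0 < size pi
  end.

(* A word x_m x_{m-1} ... x_1 is represented by the sequence
   [:: x_m; ...; x_1] (written order; the last element x_1 is applied first).
   [reach w sigma] : the composition psi_w(e_0) is defined and equals sigma. *)
Fixpoint reach (w : seq letter) (sigma : seq nat) : Prop :=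
  match w with
  | [::] => sigma = [::]
  | x :: w' => exists pi, reach w' pi /\ in_dom x pi /\ sigma = psi x pi
  end.

Definition L_Rect (w : seq letter) : Prop :=
  1 <= size w /\ exists sigma, reach w sigma.

Definition has_factor (w f : seq letter) : Prop :=
  exists p s, w = p ++ f ++ s.

Definition block (b : seq letter) : Prop :=
  exists (a : nat) (s : seq letter),
    all (fun x => (x == L2) || (x == Lu)) s /\ b = nseq a L1 ++ s ++ [:: Ld].

Definition regex_lang (w : seq letter) : Prop :=
  exists (bs : seq (seq letter)) (k : nat),
    (forall b, b \in bs -> block b) /\ w = flatten bs ++ nseq k.+1 L1.

(* Main.v *)
Require Import Defs.
From mathcomp Require Import all_boot.
From mathcomp Require Import zify.
Set Implicit Arguments. Unset Strict Implicit. Unset Printing Implicit Defensive.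

Definition sh (v y : nat) := if v <= y then y.+1 else y.

Lemma sh_lt v x y : (sh v x < sh v y) = (x < y).
Proof. rewrite /sh; case: (leqP v x); case: (leqP v y) => *; apply/idP/idP => *; lia. Qed.

Lemma sh_inj v : injective (sh v).
Proof. move=> x y; rewrite /sh; case: (leqP v x); case: (leqP v y) => *; lia. Qed.

Lemma sh_neq v y : sh v y != v.
Proof. rewrite /sh; case: (leqP v y) => *; lia. Qed.

Lemma is_permP s : is_perm s <-> uniq s /\ (forall x, x \in s -> 0 < x <= size s).
Proof.
rewrite /is_perm; split.
- move=> H; split; first by rewrite (perm_uniq H) iota_uniq.
  move=> x; rewrite (perm_mem H) mem_iota; lia.
- move=> [Hu Hm]; apply: uniq_perm => //; first exact: iota_uniq.
  have Hs : {subset s <= iota 1 (size s)} by move=> x /Hm; rewrite mem_iota; lia.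
  have Hz : size (iota 1 (size s)) <= size s by rewrite size_iota.
  by have [_ E] := uniq_min_size Hu Hs Hz.
Qed.

Lemma rho_perm_eq v j pi : perm_eq (rho v j pi) (v :: map (sh v) pi).
Proof.
have E := perm_catCA (take j.-1 (map (sh v) pi)) [:: v] (drop j.-1 (map (sh v) pi)).
rewrite cat_take_drop in E.
by apply/permPl; exact: E.
Qed.

Lemma is_perm_perm s t : perm_eq s t -> is_perm t -> is_perm s.
Proof. by move=> H; rewrite /is_perm (perm_size H); apply: perm_trans. Qed.

Lemma ins_perm v pi : is_perm pi -> 0 < v <= (size pi).+1 -> is_perm (v :: map (sh v) pi).
Proof.
move=> /is_permP [Hu Hm] Hv; apply/is_permP; split.
- rewrite /= map_inj_uniq ?Hu ?andbT; last exact: sh_inj.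
  apply/mapP => [[y _ /eqP]]; by rewrite eq_sym (negbTE (sh_neq v y)).
- move=> x; rewrite inE /= size_map => /orP [/eqP -> //| /mapP [y /Hm Hy ->]].
  rewrite /sh; case: (leqP v y) => *; lia.
Qed.

Lemma perm_pos s x : is_perm s -> x \in s -> 0 < x <= size s.
Proof. by move=> /is_permP [_ H]; apply: H. Qed.

Lemma psi_perm x pi : in_dom x pi -> is_perm (psi x pi).
Proof.
case=> [[Hp _] Hx]; case: x Hx => Hx; rewrite /psi;
  apply: is_perm_perm (rho_perm_eq _ _ _) _; apply: ins_perm => //.
- case: pi Hp Hx => [|h t] Hp [] //= _ _; have := perm_pos Hp (mem_head h t); simpl; lia.
- case: pi Hp Hx => [|h t] Hp //= _; have := perm_pos Hp (mem_head h t); simpl; lia.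
Qed.

Lemma psi_size x pi : size (psi x pi) = (size pi).+1.
Proof. by case: x; rewrite /psi (perm_size (rho_perm_eq _ _ _)) /= size_map. Qed.

Lemma psi1E pi : psi L1 pi = 1 :: map (sh 1) pi.
Proof. by rewrite /psi /rho /= ?take0 ?drop0. Qed.
Lemma psi2E h t : psi L2 (h :: t) = sh 1 h :: 1 :: map (sh 1) t.
Proof. by rewrite /psi /rho /= ?take0 ?drop0. Qed.
Lemma psiuE h t : psi Lu (h :: t) = h :: h.+1 :: map (sh h) t.
Proof. by rewrite /psi /rho /= ?take0 ?drop0 ?leqnn. Qed.
Lemma psidE h t : psi Ld (h :: t) = h.+1 :: h :: map (sh h.+1) t.
Proof. by rewrite /psi /rho /= ?take0 ?drop0 ?ltnn. Qed.

Definition bad (a b c d : nat) : Prop :=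
  (c < a /\ a < d /\ d < b) \/ (d < a /\ a < c /\ c < b) \/
  (c < b /\ b < d /\ d < a) \/ (d < b /\ b < c /\ c < a).

Definition avoid (s : seq nat) := forall a b c d, subseq [:: a; b; c; d] s -> ~ bad a b c d.


Lemma contains4 s p : contains s p -> size p = 4 -> exists a b c d,
  subseq [:: a; b; c; d] s /\ forall i j, i < 4 -> j < 4 ->
  (nth 0 [:: a; b; c; d] i < nth 0 [:: a; b; c; d] j) = (nth 0 p i < nth 0 p j).
Proof.
move=> [t [Hs [Ht H]]] Hp; rewrite Hp in Ht H.
case: t Hs Ht H => [|a [|b [|c [|d [|? ?]]]]] //= Hs _ H.
by exists a, b, c, d.
Qed.

Lemma rectE s : rectangular s <-> is_perm s /\ avoid s.
Proof.
split.
- move=> [Hp [H1 [H2 [H3 H4]]]]; split=> // a b c d Hs.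
  case=> [Hb|[Hb|[Hb|Hb]]].
  + apply: H1; exists [:: a; b; c; d]; do 2!split => //; move=> i j Hi Hj;
    case: i Hi => [|[|[|[|i]]]] // _; case: j Hj => [|[|[|[|j]]]] // _ /=; lia.
  + apply: H2; exists [:: a; b; c; d]; do 2!split => //; move=> i j Hi Hj;
    case: i Hi => [|[|[|[|i]]]] // _; case: j Hj => [|[|[|[|j]]]] // _ /=; lia.
  + apply: H3; exists [:: a; b; c; d]; do 2!split => //; move=> i j Hi Hj;
    case: i Hi => [|[|[|[|i]]]] // _; case: j Hj => [|[|[|[|j]]]] // _ /=; lia.
  + apply: H4; exists [:: a; b; c; d]; do 2!split => //; move=> i j Hi Hj;
    case: i Hi => [|[|[|[|i]]]] // _; case: j Hj => [|[|[|[|j]]]] // _ /=; lia.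
- move=> [Hp Ha]; split => //.
  split; [|split; [|split]] => /contains4 [] // a [b [c [d [Hs H]]]];
  apply: (Ha a b c d Hs);
  have := H 0 1 isT isT; have := H 0 2 isT isT; have := H 0 3 isT isT;
  have := H 1 2 isT isT; have := H 1 3 isT isT; have := H 2 3 isT isT;
  have := H 1 0 isT isT; have := H 2 0 isT isT; have := H 3 0 isT isT;
  have := H 2 1 isT isT; have := H 3 1 isT isT; have := H 3 2 isT isT;
  rewrite /= /bad; move: a b c d {Hs H} => a b c d; lia.
Qed.

Lemma subseq_cons_neq (a y : nat) s t : a != y -> subseq (a :: s) (y :: t) = subseq (a :: s) t.
Proof. by move=> /negbTE H /=; rewrite H. Qed.
Lemma subseq_cons_eq (a : nat) s t : subseq (a :: s) (a :: t) = subseq s t.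
Proof. by rewrite /= eqxx. Qed.

Lemma subseq_map_inv (f : nat -> nat) s t :
  subseq s (map f t) -> exists s', subseq s' t /\ s = map f s'.
Proof.
case/subseqP => m Hm ->; exists (mask m t); split; first exact: mask_subseq.
by rewrite map_mask.
Qed.

Lemma avoid_map v s : avoid s -> avoid (map (sh v) s).
Proof.
move=> H a b c d /subseq_map_inv [s' [Hs E]].
case: s' Hs E => [|a' [|b' [|c' [|d' [|? ?]]]]] Hs //= [] -> -> -> ->.
rewrite /bad !sh_lt; exact: H Hs.
Qed.

Lemma pos4 s a b c d : is_perm s -> subseq [:: a; b; c; d] s ->
  0 < a /\ 0 < b /\ 0 < c /\ 0 < d.
Proof.
move=> Hp /mem_subseq Hs.
have P x : x \in [:: a; b; c; d] -> 0 < x by move=> /Hs /(perm_pos Hp); lia.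
have := P a; have := P b; have := P c; have := P d.
rewrite !inE !eqxx ?orbT /=; lia.
Qed.

Lemma sub3 (b c d : nat) s : subseq [:: b; c; d] s -> [/\ b \in s, c \in s & d \in s].
Proof. by move/mem_subseq => H; split; apply: H; rewrite !inE !eqxx ?orbT. Qed.

Lemma out_sh v h t z : (v = h) \/ (v = h.+1) -> h \notin t -> z \in map (sh v) t ->
  z < h \/ h.+1 < z.
Proof.
move=> Hv Ht /mapP [y Hy ->].
have : y != h by apply: contraNneq Ht => <-.
rewrite /sh; case: (leqP v y) => ? ?; lia.
Qed.

Lemma psi_avoid x pi : in_dom x pi -> avoid (psi x pi).
Proof.
move=> Hd; have Hp := psi_perm Hd.
case: Hd => [/rectE [Hpi Hav] Hx].
move: Hp; case: x Hx => [_|[Hs H1]|[Hs H1]|Hs].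
- rewrite psi1E => Hp a b c d Hsub Hb; have P := pos4 Hp Hsub; move: Hsub Hb P.
  case: (eqVneq a 1) => [->|ne].
  + rewrite /bad; lia.
  + rewrite subseq_cons_neq // => Hsub Hb _. exact: (avoid_map (v:=1) Hav Hsub Hb).
- case: pi Hpi Hav Hs H1 => [|h t] // Hpi Hav _ H1.
  rewrite psi2E => Hp a b c d Hsub Hb; have P := pos4 Hp Hsub; move: Hsub Hb P.
  have Hav' := avoid_map (v:=1) Hav; rewrite map_cons in Hav'.
  case: (eqVneq a (sh 1 h)) => [->|ne].
  + rewrite subseq_cons_eq; case: (eqVneq b 1) => [->|nb].
    * rewrite /bad; lia.
    * rewrite subseq_cons_neq // => Hsub Hb _; apply: (Hav' _ b c d _ Hb).
      by rewrite subseq_cons_eq.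
  + rewrite subseq_cons_neq //; case: (eqVneq a 1) => [->|na].
    * rewrite /bad; lia.
    * rewrite subseq_cons_neq // => Hsub Hb _; apply: (Hav' a b c d _ Hb).
      exact: (subseq_trans Hsub (subseq_cons _ _)).
- case: pi Hpi Hav Hs H1 => [|h t] // Hpi Hav _ H1.
  have Hnt : h \notin t by move: Hpi => /is_permP [/andP [] ] .
  rewrite psiuE => Hp a b c d Hsub Hb; have P := pos4 Hp Hsub; move: Hsub Hb P.
  have Hav' := avoid_map (v:=h) Hav; rewrite map_cons {1}/sh leqnn in Hav'.
  case: (eqVneq a h) => [->|na].
  + rewrite subseq_cons_eq; case: (eqVneq b h.+1) => [->|nb].
    * rewrite /bad; lia.
    * rewrite subseq_cons_neq // => Hsub Hb _.
      case: (sub3 Hsub) => /(out_sh (or_introl erefl) Hnt) ? /(out_sh (or_introl erefl) Hnt) ?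
         /(out_sh (or_introl erefl) Hnt) ?.
      apply: (Hav' h.+1 b c d); first by rewrite subseq_cons_eq.
      move: Hb; rewrite /bad; lia.
  + rewrite subseq_cons_neq // => Hsub Hb _; exact: (Hav' a b c d Hsub Hb).
- case: pi Hpi Hav Hs => [|h t] // Hpi Hav _.
  have Hnt : h \notin t by move: Hpi => /is_permP [/andP [] ] .
  rewrite psidE => Hp a b c d Hsub Hb; have P := pos4 Hp Hsub; move: Hsub Hb P.
  have Hav' := avoid_map (v:=h.+1) Hav; rewrite map_cons {1}/sh ltnn in Hav'.
  case: (eqVneq a h.+1) => [->|na].
  + rewrite subseq_cons_eq; case: (eqVneq b h) => [->|nb].
    * rewrite /bad; lia.
    * rewrite subseq_cons_neq // => Hsub Hb _.
      case: (sub3 Hsub) => /(out_sh (or_intror erefl) Hnt) ? /(out_sh (or_intror erefl) Hnt) ?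
         /(out_sh (or_intror erefl) Hnt) ?.
      apply: (Hav' h b c d); first by rewrite subseq_cons_eq.
      move: Hb; rewrite /bad; lia.
  + rewrite subseq_cons_neq // => Hsub Hb _; exact: (Hav' a b c d Hsub Hb).
Qed.

Lemma psi_rect x pi : in_dom x pi -> rectangular (psi x pi).
Proof. by move=> Hd; apply/rectE; split; [exact: psi_perm | exact: psi_avoid]. Qed.

Lemma psi_head x pi : in_dom x pi -> (head 0 (psi x pi) == 1) = (x == L1).
Proof.
case=> [[Hp _] Hx]; case: x Hx => [_|[Hs H1]|[Hs H1]|Hs]; first by rewrite psi1E.
- case: pi Hp Hs H1 => [|h t] // Hp _ H1; rewrite psi2E /= /sh.
  have -> : (L2 == L1) = false by [].
  by case: (leqP 1 h) => ?; apply/negbTE/eqP; lia.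
- case: pi Hp Hs H1 => [|h t] // Hp _ H1; rewrite psiuE /=.
  have -> : (Lu == L1) = false by [].
  by apply/negbTE/eqP.
- case: pi Hp Hs => [|h t] // Hp _; rewrite psidE /=.
  have := perm_pos Hp (mem_head h t); move=> ?.
  have -> : (Ld == L1) = false by [].
  apply/negbTE/eqP; lia.
Qed.

Lemma rect_nil : rectangular [::].
Proof. by apply/rectE; split. Qed.

Lemma reach_inv w s : reach w s ->
  [/\ rectangular s, size s = size w & (head 0 s == 1) = (if w is x :: _ then x == L1 else false)].
Proof.
elim: w s => [|x w IH] s /=; first by move=> ->; split => //; exact: rect_nil.
move=> [pi [Hr [Hd ->]]]; have [_ Hsz _] := IH _ Hr.
split; [exact: psi_rect | by rewrite psi_size Hsz | exact: psi_head].
Qed.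

Definition cond x (w : seq letter) :=
  match x with
  | L1 => true
  | L2 | Lu => if w is y :: _ then y != L1 else false
  | Ld => w != [::]
  end.

Fixpoint valid (w : seq letter) := if w is x :: w' then valid w' && cond x w' else true.

Lemma reachE w : (exists s, reach w s) <-> valid w.
Proof.
elim: w => [|x w IH] /=; first by split=> // _; exists [::].
split.
- move=> [s [pi [Hr [[Hrect Hd] _]]]].
  have [_ Hsz Hh] := reach_inv Hr.
  rewrite (proj1 IH (ex_intro _ pi Hr)) /=; clear IH.
  case: x Hd => [_|[Hs H1]|[Hs H1]|Hs] //=.
  + case: w Hr Hsz Hh => [|y w] _ /=; first by move=> Hz; rewrite Hz in Hs.
    by move=> _ Hh; apply/negP => Hy; apply: H1; apply/eqP; rewrite Hh.
  + case: w Hr Hsz Hh => [|y w] _ /=; first by move=> Hz; rewrite Hz in Hs.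
    by move=> _ Hh; apply/negP => Hy; apply: H1; apply/eqP; rewrite Hh.
  + by case: w Hr Hsz {Hh} => [|y w] //= _ Hz; rewrite Hz in Hs.
- case/andP => /IH [pi Hr] Hc.
  have [Hrect Hsz Hh] := reach_inv Hr; clear IH.
  exists (psi x pi), pi; split => //; split => //.
  case: x Hc => //=.
  + case: w Hr Hsz Hh => [|y w] //= _ Hsz Hh Hy. split => //; split; first by rewrite Hsz.
    by move=> E; move: Hh; rewrite E eqxx (negbTE Hy).
  + case: w Hr Hsz Hh => [|y w] //= _ Hsz Hh Hy; split => //; split; first by rewrite Hsz.
    by move=> E; move: Hh; rewrite E eqxx (negbTE Hy).
  + by case: w Hr Hsz Hh => [|y w] //= _ Hz; split => //; rewrite Hz.
Qed.

Fixpoint hf2 (a b : letter) (w : seq letter) : bool :=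
  match w with
  | x :: w' => (if w' is y :: _ then (x == a) && (y == b) else false) || hf2 a b w'
  | [::] => false
  end.

Lemma hf2P a b w : has_factor w [:: a; b] <-> hf2 a b w.
Proof.
split.
- move=> [p [s ->]]; elim: p => [|x p IH] /=; first by rewrite !eqxx.
  by rewrite IH orbT.
- elim: w => [|x w IH] //= /orP [|/IH [p [s ->]]].
  + case: w IH => [|y w] // _ /andP [/eqP -> /eqP ->]; by exists [::], w.
  + by exists (x :: p), s.
Qed.

Definition endsL1 (w : seq letter) := if w is x :: w' then last x w' == L1 else false.

Lemma endsL1P w : endsL1 w <-> exists w', w = rcons w' L1.
Proof.
split.
- case: w => [|x w] //= /eqP E; exists (belast x w); by rewrite lastI E.
- move=> [w' ->]; case: w' => [|y w'] //=; by rewrite last_rcons.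
Qed.

Lemma validE w : valid w = (w == [::]) || [&& endsL1 w, ~~ hf2 L2 L1 w & ~~ hf2 Lu L1 w].
Proof.
elim: w => [|x w IH]; first by [].
have V : valid (x :: w) = valid w && cond x w by [].
rewrite V IH; case: w {IH V} => [|y w].
- by case: x.
- have E1 a b : hf2 a b [:: x, y & w] = ((x == a) && (y == b)) || hf2 a b (y :: w) by [].
  have E2 : endsL1 [:: x, y & w] = endsL1 (y :: w) by [].
  rewrite !E1 E2 {E1 E2}.
  move: (endsL1 (y :: w)) (hf2 L2 L1 (y :: w)) (hf2 Lu L1 (y :: w)) => p q r.
  by case: x; case: y; case: p; case: q; case: r.
Qed.

Lemma LRectE w : L_Rect w <-> (w != [::]) && valid w.
Proof.
rewrite /L_Rect; split.
- by move=> [Hs /reachE Hv]; case: w Hs Hv.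
- by move=> /andP [Hn /reachE Hv]; split => //; case: w Hn {Hv}.
Qed.

Lemma valid_nseq k : valid (nseq k L1).
Proof. by elim: k => //= k ->. Qed.

Lemma valid_block b w : block b -> valid w -> w != [::] -> valid (b ++ w).
Proof.
move=> [a [s [Hs ->]]] Hv Hn; rewrite -!catA /=.
elim: a => [|a IH] /=; last by rewrite IH.
elim: s Hs => [|y s IH] /=; first by rewrite Hv Hn.
move=> /andP [Hy Hs]; rewrite IH //=.
case: s Hs {IH} => [|z s] /=; first by case/orP: Hy => /eqP ->.
by case/andP => Hz _; case/orP: Hy => /eqP ->; case/orP: Hz => /eqP ->.
Qed.

Lemma regex_valid w : regex_lang w -> (w != [::]) && valid w.
Proof.
move=> [bs [k [Hb ->]]]; apply/andP; split; first by case: (flatten bs).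
elim: bs Hb => [|b bs IH] Hb; first exact: (valid_nseq k.+1).
rewrite [flatten _]/= -catA; apply: valid_block.
- by apply: Hb; rewrite mem_head.
- by apply: IH => b' Hb'; apply: Hb; rewrite inE Hb' orbT.
- by case: (flatten bs).
Qed.

Lemma valid_regex w : valid w -> w != [::] -> regex_lang w.
Proof.
elim: w => [|x w IH] //= /andP [Hv Hc] _.
case: x Hc => Hc.
- case: w IH Hv {Hc} => [|y w] IH Hv; first by exists [::], 0.
  have [bs [k [Hb E]]] := IH Hv isT.
  case: bs Hb E => [|b bs] Hb E.
  + by exists [::], k.+1; rewrite E.
  + have [a [s [Hs Eb]]] := Hb b (mem_head _ _).
    exists ((L1 :: b) :: bs), k; split; last by rewrite E.
    move=> b0; rewrite inE => /orP [/eqP ->|Hb0]; last by apply: Hb; rewrite inE Hb0 orbT.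
    by exists a.+1, s; rewrite Eb.
- case: w IH Hv Hc => [|y w] // IH Hv Hy.
  have [bs [k [Hb E]]] := IH Hv isT.
  case: bs Hb E => [|b bs] Hb E; first by move: E Hy => /= [-> _].
  have [a [s [Hs Eb]]] := Hb b (mem_head _ _).
  case: a Eb => [|a] Eb; last by move: E Hy; rewrite Eb /= => [[-> _]].
  exists ((L2 :: b) :: bs), k; split; last by rewrite E.
  move=> b0; rewrite inE => /orP [/eqP ->|Hb0]; last by apply: Hb; rewrite inE Hb0 orbT.
  by exists 0, (L2 :: s); rewrite Eb.
- case: w IH Hv Hc => [|y w] // IH Hv Hy.
  have [bs [k [Hb E]]] := IH Hv isT.
  case: bs Hb E => [|b bs] Hb E; first by move: E Hy => /= [-> _].
  have [a [s [Hs Eb]]] := Hb b (mem_head _ _).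
  case: a Eb => [|a] Eb; last by move: E Hy; rewrite Eb /= => [[-> _]].
  exists ((Lu :: b) :: bs), k; split; last by rewrite E.
  move=> b0; rewrite inE => /orP [/eqP ->|Hb0]; last by apply: Hb; rewrite inE Hb0 orbT.
  by exists 0, (Lu :: s); rewrite Eb.
- have [bs [k [Hb E]]] := IH Hv Hc.
  exists ([:: Ld] :: bs), k; split; last by rewrite E.
  move=> b0; rewrite inE => /orP [/eqP ->|Hb0]; last by apply: Hb.
  by exists 0, [::].
Qed.

Theorem lemma3p3 :
  (forall w : seq letter,
     L_Rect w <->
     ((exists w', w = rcons w' L1) /\
      ~ has_factor w [:: L2; L1] /\ ~ has_factor w [:: Lu; L1])) /\
  (forall w : seq letter, L_Rect w <-> regex_lang w).
Proof.
split => w; rewrite LRectE.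
- rewrite validE; case: w => [|x w].
  + split => // [[[w' E] _]]; by case: w' E.
  + have -> : forall Q, (x :: w != [::]) && ((x :: w == [::]) || Q) = Q by [].
    split.
    * case/and3P => /endsL1P H1 H2 H3; split => //.
      by split => /(proj1 (hf2P _ _ _)) Hf; [move: H2 | move: H3]; rewrite Hf.
    * move=> [/endsL1P H1 [H2 H3]]; rewrite H1 /=.
      apply/andP; split; apply/negP => Hf.
      + by apply: H2; apply/hf2P.
      + by apply: H3; apply/hf2P.
- split; last exact: regex_valid.
  by case/andP => Hn Hv; apply: valid_regex.
Qed.
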